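(* Let $G$ be a graph with a perfect ordering $\{B_1,\dots,B_k\}$ of its prime components, and let $f:\mathbb{R}\to\mathbb{R}$ satisfy $f(0)=0$. Define $s:=\max_{i}|S_i|$, where $S_i:=(B_1\cup\dots\cup B_{i-1})\cap B_i$. If $f[-]$ preserves positivity on $\mathcal{P}_{G_{B_i}}$ for all $1\le i\le k$ and is Loewner super-additive on $\mathcal{P}_{K_s}$, then $f[-]$ preserves positivity on $\mathcal{P}_G$.
   Context: Graphs are finite and simple; $G_U$ is the subgraph induced on $U$; $K_s$ is the complete graph on $s$ vertices. A decomposition of $G=(V,E)$ is a partition $(A,C,B)$ of $V$ with $A,B$ nonempty such that every path from $A$ to $B$ meets $C$ and $G_C$ is complete; $G$ is prime if it admits no decomposition. Decomposing $G$ into $G_{A\cup C}$ and $G_{B\cup C}$ and iterating until no further decomposition is possible yields the prime components of $G$ (vertex subsets inducing prime graphs). For subsets $B_1,\dots,B_k$, with $H_j=B_1\cup\dots\cup B_j$, $H_0=\emptyset$, $S_j=H_{j-1}\cap B_j$, the sequence is a perfect ordering if for every $1<i\le k$ there is $j<i$ with $S_i\subset B_j$, and each $S_i$ induces a complete graph. For a graph $H$ on $\{1,\dots,n\}$, $\mathcal{P}_H$ is the set of real symmetric PSD $n\times n$ matrices $M$ with $m_{ij}=0$ for $i\ne j$ non-adjacent. $f[M]:=(f(m_{ij}))$; $f[-]$ preserves positivity on $\mathcal{P}_H$ if $f[M]\in\mathcal{P}_H$ for all $M\in\mathcal{P}_H$; it is Loewner super-additive on $\mathcal{P}_H$ if $f[M+N]-f[M]-f[N]\in\mathcal{P}_H$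 for all $M,N\in\mathcal{P}_H$. *)

(* Defs.v *)
From HB Require Import structures.
From mathcomp Require Import all_boot all_order all_algebra.
From mathcomp Require Import reals.
Set Implicit Arguments. Unset Strict Implicit. Unset Printing Implicit Defensive.
Import Order.TTheory GRing.Theory Num.Theory.
Local Open Scope ring_scope.

Section Graphs.
Variable n : nat.
(* A graph on {0,..,n-1}, given by its adjacency relation [e]
   (simplicity = symmetry + irreflexivity is assumed in the theorem). *)
Variable e : rel 'I_n.

Definition separates (W A B C : {set 'I_n}) : Prop :=
  forall (x : 'I_n) (p : seq 'I_n),
    x \in A -> last x p \in B -> path e x p -> all (mem W) (x :: p) ->
    has (mem C) (x :: p).

Definition is_clique (C : {set 'I_n}) : Prop :=
  forall x y, x \in C -> y \in C -> x != y -> e x y.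

Definition decomposition (W A C B : {set 'I_n}) : Prop :=
  [/\ A :|: C :|: B = W,
      A :&: C = set0 /\ A :&: B = set0 /\ C :&: B = set0,
      A != set0, B != set0 &
      separates W A B C /\ is_clique C].

Definition prime_graph (W : {set 'I_n}) : Prop :=
  ~ exists A C B, decomposition W A C B.

Inductive prime_comps : {set 'I_n} -> {set {set 'I_n}} -> Prop :=
| pc_prime W : prime_graph W -> prime_comps W [set W]
| pc_dec W A C B P1 P2 : decomposition W A C B ->
    prime_comps (A :|: C) P1 -> prime_comps (B :|: C) P2 ->
    prime_comps W (P1 :|: P2).

(* H_j = B_1 u ... u B_j  (0-indexed: union of the first j sets) *)
Definition Hset (Bs : seq {set 'I_n}) (j : nat) : {set 'I_n} :=
  \bigcup_(i < j) nth set0 Bs i.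

(* S_i = H_{i-1} n B_i  (0-indexed: S i = (B_0 u .. u B_{i-1}) n B_i) *)
Definition Sset (Bs : seq {set 'I_n}) (i : nat) : {set 'I_n} :=
  Hset Bs i :&: nth set0 Bs i.

Definition perfect_ordering (Bs : seq {set 'I_n}) : Prop :=
  (forall i, 0 < i < size Bs -> exists2 j, j < i & Sset Bs i \subset nth set0 Bs j)%N
  /\ (forall i, i < size Bs -> is_clique (Sset Bs i))%N.

End Graphs.

(* induced subgraph G_U, with vertex set relabelled as 'I_#|U| via enum_val *)
Definition induced n (e : rel 'I_n) (U : {set 'I_n}) : rel 'I_#|U| :=
  fun a b => e (enum_val a) (enum_val b).

Arguments induced {n} e U _ _ : assert.

Definition complete_graph (s : nat) : rel 'I_s := fun a b => a != b.

Arguments complete_graph : clear implicits.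

Section Matrices.
Variable R : realType.

Definition psd m (M : 'M[R]_m) : Prop :=
  M^T = M /\ forall x : 'cV[R]_m, 0 <= (x^T *m M *m x) 0 0.

Definition in_PH m (H : rel 'I_m) (M : 'M[R]_m) : Prop :=
  psd M /\ forall i j, i != j -> ~~ H i j -> M i j = 0.

Definition entrywise (f : R -> R) m (M : 'M[R]_m) : 'M[R]_m := map_mx f M.

Definition preserves_positivity (f : R -> R) m (H : rel 'I_m) : Prop :=
  forall M, in_PH H M -> in_PH H (entrywise f M).

Definition loewner_superadditive (f : R -> R) m (H : rel 'I_m) : Prop :=
  forall M N, in_PH H M -> in_PH H N ->
    in_PH H (entrywise f (M + N) - entrywise f M - entrywise f N).
End Matrices.
Arguments preserves_positivity {R} f {m} H.
Arguments loewner_superadditive {R} f {m} H.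

(* Main.v *)
Require Import Defs.
From HB Require Import structures.
From mathcomp Require Import all_boot all_order all_algebra.
From mathcomp Require Import reals ring lra.
Set Implicit Arguments. Unset Strict Implicit. Unset Printing Implicit Defensive.
Import Order.TTheory GRing.Theory Num.Theory.
Local Open Scope ring_scope.

Section Mat.
Variable R : realType.

Definition bf n (M : 'M[R]_n) (u v : 'cV[R]_n) : R := (u^T *m M *m v) 0 0.

Lemma bfDl n (M : 'M[R]_n) u v w : bf M (u + v) w = bf M u w + bf M v w.
Proof. by rewrite /bf linearD /= !mulmxDl mxE. Qed.
Lemma bfDr n (M : 'M[R]_n) u v w : bf M u (v + w) = bf M u v + bf M u w.
Proof. by rewrite /bf !mulmxDr mxE. Qed.
Lemma bfZl n (M : 'M[R]_n) a u v : bf M (a *: u) v = a * bf M u v.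
Proof. by rewrite /bf linearZ /= -!scalemxAl mxE. Qed.
Lemma bfZr n (M : 'M[R]_n) a u v : bf M u (a *: v) = a * bf M u v.
Proof. by rewrite /bf -!scalemxAr mxE. Qed.
Lemma bfC n (M : 'M[R]_n) u v : M^T = M -> bf M u v = bf M v u.
Proof. move=> tM; rewrite /bf; transitivity ((u^T *m M *m v)^T 0 0); first by rewrite [in RHS]mxE.
by rewrite !trmx_mul trmxK tM mulmxA. Qed.
Lemma bf_delta n (M : 'M[R]_n) i j : bf M (delta_mx i 0) (delta_mx j 0) = M i j.
Proof. by rewrite /bf trmx_delta -rowE -colE !mxE. Qed.
Lemma bfB n (M N : 'M[R]_n) u v : bf (M - N) u v = bf M u v - bf N u v.
Proof. by rewrite /bf mulmxBr mulmxBl !mxE. Qed.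
Lemma bf_rank1 n (c u v : 'cV[R]_n) a :
  bf (a *: (c *m c^T)) u v = a * ((u^T *m c) 0 0 * (c^T *m v) 0 0).
Proof. by rewrite /bf -scalemxAr -scalemxAl mulmxA -[u^T *m c *m c^T *m v]mulmxA [in LHS]mxE [in LHS]mxE big_ord1. Qed.

Lemma psdD n (A B : 'M[R]_n) : psd A -> psd B -> psd (A + B).
Proof.
move=> [tA pA] [tB pB]; split; first by rewrite linearD /= tA tB.
move=> x; rewrite mulmxDr mulmxDl mxE; exact: addr_ge0.
Qed.

Lemma psd0 n : psd (0 : 'M[R]_n).
Proof. by split; [rewrite trmx0 | move=> x; rewrite mulmx0 mul0mx mxE]. Qed.

Lemma psd_congr n m (M : 'M[R]_n) (Q : 'M[R]_(n,m)) : psd M -> psd (Q^T *m M *m Q).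
Proof.
move=> [tM pM]; split; first by rewrite !trmx_mul trmxK tM mulmxA.
move=> x; have -> : x^T *m (Q^T *m M *m Q) *m x = (Q *m x)^T *m M *m (Q *m x).
  by rewrite trmx_mul !mulmxA.
exact: pM.
Qed.

Lemma psd_sym n (M : 'M[R]_n) i j : psd M -> M i j = M j i.
Proof. by case=> tM _; rewrite -[in LHS]tM mxE. Qed.

Lemma psd_diag n (M : 'M[R]_n) i : psd M -> 0 <= M i i.
Proof. by case=> _ pM; rewrite -bf_delta; apply: pM. Qed.

Lemma psd_zero n (M : 'M[R]_n) i y : psd M -> M y y = 0 -> M i y = 0.
Proof.
move=> hM hyy; have [tM pM] := hM.
have [->//|b0] := eqVneq (M i y) 0.
set a := M i i; set b := M i y.
have ha : 0 <= a by exact: psd_diag.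
set t := - (a + 1) / b.
have := pM (delta_mx i 0 + t *: delta_mx y 0).
rewrite -/(bf M _ _) !bfDl !bfDr !bfZl !bfZr !bf_delta hyy -/a -/b.
rewrite (psd_sym y i hM) -/b.
have -> : a + t * b + (t * b + t * (t * 0)) = - a - 2 by rewrite /t; field.
lra.
Qed.

Lemma psd_elim_step n (M : 'M[R]_n) y : psd M ->
  let R1 := (M y y)^-1 *: (col y M *m (col y M)^T) in
  [/\ psd R1, psd (M - R1), forall i j, R1 i j = (M y y)^-1 * (M i y * M j y)
    & forall i, (M - R1) i y = 0].
Proof.
move=> hM R1; have [tM pM] := hM.
have R1E : forall i j, R1 i j = (M y y)^-1 * (M i y * M j y).
  by move=> i j; rewrite /R1 !mxE big_ord1 !mxE.
have tR1 : R1^T = R1 by rewrite /R1 linearZ /= trmx_mul trmxK.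
have hd := psd_diag y hM.
have cE : forall u, (u^T *m col y M) 0 0 = bf M u (delta_mx y 0).
  by move=> u; rewrite /bf colE mulmxA.
have cE' : forall u, ((col y M)^T *m u) 0 0 = bf M (delta_mx y 0) u.
  by move=> u; rewrite /bf colE trmx_mul tM.
have bR1 : forall u, bf R1 u u = (M y y)^-1 * (bf M u (delta_mx y 0))^+2.
  move=> u; rewrite /R1 bf_rank1 cE cE' (bfC _ _ tM) expr2 //.
split => //.
- split => // x; rewrite -/(bf R1 x x) bR1; apply: mulr_ge0; last exact: sqr_ge0.
  by rewrite invr_ge0.
- split; first by rewrite linearD linearN /= tM tR1.
  move=> x; rewrite -/(bf _ x x) bfB bR1.
  have [d0|dn0] := eqVneq (M y y) 0.
    by rewrite d0 invr0 mul0r subr0; apply: pM.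
  set b := bf M x (delta_mx y 0).
  set t := - (b / M y y).
  have := pM (x + t *: delta_mx y 0).
  rewrite -/(bf M _ _) !bfDl !bfDr !bfZl !bfZr bf_delta -/b (bfC (delta_mx y 0) x tM) -/b.
  have -> : bf M x x + t * b + (t * b + t * (t * M y y)) = bf M x x - (M y y)^-1 * b ^+ 2.
    by rewrite /t; field.
  by [].
- move=> i; have -> : (M - R1) i y = M i y - R1 i y by rewrite !mxE.
  rewrite R1E.
  have [d0|dn0] := eqVneq (M y y) 0.
    by rewrite (psd_zero i hM d0) mul0r mulr0 subr0.
  by rewrite mulrCA mulVf // mulr1 subrr.
Qed.

Lemma psd_elim n (Z : {set 'I_n}) k : forall (Y : {set 'I_n}) (M : 'M[R]_n),
  #|Y| = k -> Y \subset Z -> psd M ->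
  (forall i y, y \in Y -> i \notin Z -> M i y = 0) ->
  exists M1, exists M2, [/\ psd M1, psd M2, M = M1 + M2,
     (forall i j, j \in Y -> M1 i j = 0) & (forall i j, i \notin Z -> M2 i j = 0)].
Proof.
elim: k => [|k IH] Y M hk YZ hM hz.
  exists M, 0; split => //; [exact: psd0 | by rewrite addr0 | | by move=> i j; rewrite mxE].
  by move=> i j; rewrite (cards0_eq hk) inE.
have [y yY] : exists y, y \in Y by apply/card_gt0P; rewrite hk.
have [hR1 hM' R1E hMy] := psd_elim_step y hM.
set R1 := _ *: _ in hR1 hM' R1E hMy.
have hk' : #|Y :\ y| = k by move: hk; rewrite (cardsD1 y) yY add1n => -[].
have YZ' : Y :\ y \subset Z by apply: subset_trans YZ; apply: subD1set.
have hz' : forall i y', y' \in Y :\ y -> i \notin Z -> (M - R1) i y' = 0.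
  move=> i y'; rewrite inE => /andP [_ y'Y] iZ.
  have -> : (M - R1) i y' = M i y' - R1 i y' by rewrite !mxE.
  by rewrite R1E (hz i y' y'Y iZ) (hz i y yY iZ) mul0r mulr0 subr0.
have [M1 [M2 [h1 h2 hE h1z h2z]]] := IH _ _ hk' YZ' hM' hz'.
exists M1, (M2 + R1); split => //.
- exact: psdD.
- by rewrite addrA -hE subrK.
- move=> i j jY; have [jy|jy] := eqVneq j y; last first.
    by apply: h1z; rewrite in_setD1 jy jY.
  subst j; apply: (psd_zero _ h1).
  have e0 : M1 y y + M2 y y = 0.
    by have := hMy y; rewrite hE; rewrite !mxE.

  have := psd_diag y h1; have := psd_diag y h2; lra.
- move=> i j iZ; have -> : (M2 + R1) i j = M2 i j + R1 i j by rewrite !mxE.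
  by rewrite h2z // R1E (hz i y yY iZ) mul0r mulr0 addr0 //.
Qed.

Section PullPush.
Variables (m n : nat) (g : 'I_m -> 'I_n).
Definition Pm : 'M[R]_(m,n) := \matrix_(a, i) (g a == i)%:R.
Definition pull (M : 'M[R]_n) : 'M[R]_m := Pm *m M *m Pm^T.
Definition push (N : 'M[R]_m) : 'M[R]_n := Pm^T *m N *m Pm.

Lemma mulPm p (M : 'M[R]_(n,p)) : Pm *m M = \matrix_(a, j) M (g a) j.
Proof.
apply/matrixP => a j; rewrite !mxE (bigD1 (g a)) //= !mxE eqxx mul1r big1 ?addr0 //.
by move=> i /negPf ne; rewrite mxE eq_sym ne mul0r.
Qed.

Lemma mulPmt p (M : 'M[R]_(p,n)) : M *m Pm^T = \matrix_(i, b) M i (g b).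
Proof.
apply/matrixP => i b; rewrite !mxE (bigD1 (g b)) //= !mxE eqxx mulr1 big1 ?addr0 //.
by move=> j /negPf ne; rewrite !mxE eq_sym ne mulr0.
Qed.

Lemma pullE M a b : pull M a b = M (g a) (g b).
Proof. by rewrite /pull mulPmt mxE mulPm mxE. Qed.

Lemma psd_pull M : psd M -> psd (pull M).
Proof. by move=> hM; rewrite /pull -[Pm in Pm *m M]trmxK; apply: psd_congr. Qed.

Lemma psd_push N : psd N -> psd (push N).
Proof. by move=> hN; apply: psd_congr. Qed.

Hypothesis ginj : injective g.

Lemma PPt : Pm *m Pm^T = 1%:M.
Proof. by apply/matrixP => a b; rewrite mulPm !mxE (inj_eq ginj) eq_sym. Qed.

Lemma pull_push N : pull (push N) = N.
Proof. by rewrite /pull /push !mulmxA PPt mul1mx -mulmxA PPt mulmx1. Qed.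

Lemma PtP_l p (M : 'M[R]_(n,p)) : (forall i j, i \notin codom g -> M i j = 0) ->
  Pm^T *m (Pm *m M) = M.
Proof.
move=> hM; rewrite mulPm; apply/matrixP => i j; rewrite !mxE.
have [/codomP [a ->]|ni] := boolP (i \in codom g).
  rewrite (bigD1 a) //= !mxE eqxx mul1r big1 ?addr0 //.
  by move=> b /negPf ne; rewrite !mxE (inj_eq ginj) ne mul0r.
rewrite hM // big1 // => a _; rewrite !mxE.
have -> : (g a == i) = false by apply/negP => /eqP ga; move: ni; rewrite -ga codom_f.
by rewrite mul0r.
Qed.

Lemma PtP_r p (M : 'M[R]_(p,n)) : (forall i j, j \notin codom g -> M i j = 0) ->
  (M *m Pm^T) *m Pm = M.
Proof.
move=> hM; rewrite mulPmt; apply/matrixP => i j; rewrite !mxE.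
have [/codomP [a ->]|ni] := boolP (j \in codom g).
  rewrite (bigD1 a) //= !mxE eqxx mulr1 big1 ?addr0 //.
  by move=> b /negPf ne; rewrite !mxE (inj_eq ginj) ne mulr0.
rewrite hM // big1 // => a _; rewrite !mxE.
have -> : (g a == j) = false by apply/negP => /eqP ga; move: ni; rewrite -ga codom_f.
by rewrite mulr0.
Qed.

Lemma push_pull (M : 'M[R]_n) : (forall i j, i \notin codom g -> M i j = 0) ->
  (forall i j, j \notin codom g -> M i j = 0) -> push (pull M) = M.
Proof.
move=> h1 h2; rewrite /push /pull -!mulmxA PtP_l; first by rewrite mulmxA PtP_r.
by move=> i j ni; rewrite mxE big1 // => k _; rewrite h1 // mul0r.
Qed.
End PullPush.
End Mat.
Section Graph.
Variables (n : nat) (e : rel 'I_n) (e_sym : symmetric e).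

Lemma disj (A C : {set 'I_n}) x : A :&: C = set0 -> x \in A -> x \in C -> False.
Proof. move=> h xA xC; have : x \in A :&: C by rewrite inE xA xC.
by rewrite h inE. Qed.

Lemma pc_cover W P : prime_comps e W P -> forall x, x \in W -> exists2 B, B \in P & x \in B.
Proof.
elim=> [W0 _ | W0 A C B P1 P2 [hU _ _ _ _] _ IH1 _ IH2] x xW.
  by exists W0; rewrite ?inE.
move: xW; rewrite -hU !inE => /orP [/orP [xA|xC]|xB].
- have [B' h1 h2] : exists2 B, B \in P1 & x \in B by apply: IH1; rewrite inE xA.
  by exists B'; rewrite // inE h1.
- have [B' h1 h2] : exists2 B, B \in P1 & x \in B by apply: IH1; rewrite inE xC orbT.
  by exists B'; rewrite // inE h1.
- have [B' h1 h2] : exists2 B', B' \in P2 & x \in B' by apply: IH2; rewrite inE xB.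
  by exists B'; rewrite // inE h1 orbT.
Qed.

Lemma pc_edge W P : prime_comps e W P -> forall x y, x \in W -> y \in W -> e x y ->
  exists2 B, B \in P & (x \in B) && (y \in B).
Proof.
elim=> [W0 _ | W0 A C B P1 P2 [hU [hAC [hAB hCB]] _ _ [hsep _]] _ IH1 _ IH2] x y xW yW exy.
  by exists W0; rewrite ?inE ?xW ?yW.
have L : forall u v, u \in A :|: C -> v \in A :|: C -> e u v -> exists2 B0, B0 \in P1 :|: P2 & (u \in B0) && (v \in B0).
  by move=> u v hu hv euv; have [B' h1 h2] := IH1 u v hu hv euv; exists B'; rewrite // inE h1.
have L2 : forall u v, u \in B :|: C -> v \in B :|: C -> e u v -> exists2 B0, B0 \in P1 :|: P2 & (u \in B0) && (v \in B0).
  by move=> u v hu hv euv; have [B' h1 h2] := IH2 u v hu hv euv; exists B'; rewrite // inE h1 orbT.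
have sep : forall u v, u \in A -> v \in B -> e u v -> u \in W0 -> v \in W0 -> False.
  move=> u v uA vB euv uW vW.
  have := hsep u [:: v] uA vB; rewrite /= euv uW vW => /(_ isT isT).
  rewrite /= !orbF => /orP [uC|vC]; first exact: (disj hAC uA uC).
  by apply: (disj hCB vC vB).
move: (xW) (yW); rewrite -hU !inE => /orP [/orP [xA|xC]|xB] /orP [/orP [yA|yC]|yB].
- by apply: L; rewrite ?inE ?xA ?yA ?orbT.
- by apply: L; rewrite ?inE ?xA ?yC ?orbT.
- by case: (sep x y xA yB exy xW yW).
- by apply: L; rewrite ?inE ?xC ?yA ?orbT.
- by apply: L; rewrite ?inE ?xC ?yC ?orbT.
- by apply: L2; rewrite ?inE ?xC ?yB ?orbT.
- by case: (sep y x yA xB _ yW xW); rewrite e_sym.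
- by apply: L2; rewrite ?inE ?xB ?yC ?orbT.
- by apply: L2; rewrite ?inE ?xB ?yB ?orbT.
Qed.

Variable Bs : seq {set 'I_n}.
Local Notation Bn i := (nth set0 Bs i).

Lemma HsetP j x : reflect (exists2 i, (i < j)%N & x \in Bn i) (x \in Hset Bs j).
Proof.
apply: (iffP bigcupP) => [[i _ xi]|[i lt xi]]; first by exists i.
by exists (Ordinal lt).
Qed.

Lemma HsetS j : Hset Bs j.+1 = Hset Bs j :|: Bn j.
Proof. by rewrite /Hset big_ord_recr. Qed.

Lemma noedge j x y :
  perfect_ordering e Bs ->
  (forall x y, e x y -> exists l, [&& (l < size Bs)%N, x \in Bn l & y \in Bn l]) ->
  x \in Hset Bs j -> x \notin Bn j -> y \in Bn j -> y \notin Hset Bs j -> ~~ e x y.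
Proof.
move=> [hp _] hedge xH xB yB yH; apply/negP => exy.
have [l0 hl0] := hedge x y exy.
pose P := fun l => [&& (l < size Bs)%N, x \in Bn l & y \in Bn l].
have ex : exists l, P l by exists l0.
case: (ex_minnP ex) => l /and3P [ls xl yl] lmin.
have [ltlj|] := ltnP l j.
  by move/negP: yH; apply; apply/HsetP; exists l.
rewrite leq_eqVlt => /orP [/eqP ejl|ltjl].
  by move: xB; rewrite ejl xl.
have lpos : (0 < l < size Bs)%N by rewrite ls andbT (leq_ltn_trans _ ltjl).
have [m ml hsub] := hp l lpos.
have xS : x \in Sset Bs l.
  rewrite /Sset inE xl andbT; case/HsetP: xH => i ij xi; apply/HsetP.
  by exists i => //; apply: ltn_trans ltjl.
have yS : y \in Sset Bs l by rewrite /Sset inE yl andbT; apply/HsetP; exists j.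
have xm := subsetP hsub x xS; have ym := subsetP hsub y yS.
have ms : (m < size Bs)%N.
  by rewrite ltnNge; apply/negP => sm; move: xm; rewrite nth_default // inE.
have := lmin m; rewrite /P ms xm ym => /(_ isT); by rewrite leqNgt ml.
Qed.
End Graph.

Section Helpers.
Variable R : realType.
Lemma mxD_E n (P Q : 'M[R]_n) i j : (P + Q) i j = P i j + Q i j.
Proof. by rewrite mxE. Qed.
Lemma mxB_E n (P Q : 'M[R]_n) i j : (P - Q) i j = P i j - Q i j.
Proof. by rewrite !mxE. Qed.
Lemma entE n (f : R -> R) (P : 'M[R]_n) i j : entrywise f P i j = f (P i j).
Proof. by rewrite mxE. Qed.
End Helpers.

Lemma codom_enum n (T0 : {set 'I_n}) i :
  i \notin codom (fun a : 'I_#|T0| => enum_val a) -> i \notin T0.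
Proof.
apply: contra => iT; apply/codomP; exists (enum_rank_in iT i).
by rewrite enum_rankK_in.
Qed.

Theorem theorem4p1 (R : realType) (n : nat) (e : rel 'I_n)
  (e_sym : symmetric e) (e_irr : irreflexive e)
  (Bs : seq {set 'I_n})
  (Bs_uniq : uniq Bs)
  (Bs_comps : prime_comps e [set: 'I_n] [set B | B \in Bs])
  (Bs_perfect : perfect_ordering e Bs)
  (f : R -> R) (f0 : f 0 = 0) :
  let s := (\max_(i < size Bs) #|Sset Bs i|)%N in
  (forall i, (i < size Bs)%N ->
     preserves_positivity f (induced e (nth set0 Bs i))) ->
  loewner_superadditive f (complete_graph s) ->
  preserves_positivity f e.
Proof.
move=> s hcomp hsup M [hM hpat].
have hedge : forall x y, e x y ->
    exists l, [&& (l < size Bs)%N, x \in nth set0 Bs l & y \in nth set0 Bs l].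
  move=> x y exy.
  have [B hB /andP [xB yB]] := pc_edge e_sym Bs_comps (in_setT x) (in_setT y) exy.
  move: hB; rewrite inE => hB; exists (index B Bs).
  by rewrite index_mem hB nth_index // xB yB.
have hcov : forall x, x \in Hset Bs (size Bs).
  move=> x; have [B hB xB] := pc_cover Bs_comps (in_setT x).
  move: hB; rewrite inE => hB; apply/HsetP; exists (index B Bs).
    by rewrite index_mem.
  by rewrite nth_index.
suff claim : forall j, (j <= size Bs)%N -> forall N : 'M[R]_n, psd N ->
    (forall i k, i != k -> ~~ e i k -> N i k = 0) ->
    (forall i k, i \notin Hset Bs j -> N i k = 0) -> psd (entrywise f N).
  split; first by apply: (claim (size Bs)) => // i k; rewrite hcov.
  by move=> i k ik nik; rewrite entE hpat.
elim=> [|j IH] hj N hN hNp hNs.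
  have -> : N = 0.
    by apply/matrixP => i k; rewrite [RHS]mxE hNs //; apply/HsetP => -[i0].
  have -> : entrywise f 0 = 0 :> 'M[R]_n by apply/matrixP => i k; rewrite !mxE f0.
  exact: psd0.
have js : (j < size Bs)%N by [].
set B := nth set0 Bs j; set H := Hset Bs j; set Y := B :\: H.
have HS : Hset Bs j.+1 = H :|: B by apply: HsetS.
have Scl : is_clique e (Sset Bs j) := Bs_perfect.2 j js.
have hz : forall i y, y \in Y -> i \notin B -> N i y = 0.
  move=> i y; rewrite inE => /andP [yH yB] iB.
  have [iH|iH] := boolP (i \in H).
    apply: hNp; first by apply/eqP => iy; move: iB; rewrite iy yB.
    exact: (noedge Bs_perfect hedge iH iB yB yH).
  by apply: hNs; rewrite HS inE negb_or iH iB.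
have [M1 [M2 [h1 h2 hE h1z h2z]]] := psd_elim (erefl #|Y|) (subsetDl B H) hN hz.
have hEij : forall i k, N i k = M1 i k + M2 i k by move=> i k; rewrite hE mxD_E.
have h1z' : forall i k, i \in Y -> M1 i k = 0.
  by move=> i k iY; rewrite (psd_sym _ _ h1) h1z.
have h2z' : forall i k, k \notin B -> M2 i k = 0.
  by move=> i k kB; rewrite (psd_sym _ _ h2) h2z.
have M1B : forall i k, i \notin B -> M1 i k = N i k by move=> i k iB; rewrite hEij h2z ?addr0.
have M1Bc : forall i k, k \notin B -> M1 i k = N i k by move=> i k kB; rewrite hEij h2z' ?addr0.
have M2Y : forall i k, i \in Y -> M2 i k = N i k by move=> i k iY; rewrite hEij h1z' ?add0r.
have notS : forall i, i \notin Sset Bs j -> (i \notin B) || (i \in Y).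
  by move=> i; rewrite /Sset !inE -/H -/B; case: (i \in H); case: (i \in B).
have psd1 : psd (entrywise f M1).
  apply: IH => //; first exact: ltnW.
  - move=> i k ik nik.
    have [iS|iS] := boolP (i \in Sset Bs j).
      have [kS|kS] := boolP (k \in Sset Bs j).
        by move: nik; rewrite (Scl i k iS kS ik).
      case/orP: (notS k kS) => [kB|kY]; first by rewrite M1Bc // hNp.
      by rewrite h1z.
    case/orP: (notS i iS) => [iB|iY]; first by rewrite M1B // hNp.
    by rewrite h1z'.
  - move=> i k iH; have [iB|iB] := boolP (i \in B).
      by rewrite h1z' // inE iB iH.
    by rewrite M1B // hNs // HS inE negb_or iH iB.
have psd2 : psd (entrywise f M2).
  pose g := fun a : 'I_#|B| => enum_val a.
  have ginj : injective g by move=> a b; apply: enum_val_inj.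
  have gB : forall a, g a \in B by move=> a; apply: enum_valP.
  have hP : in_PH (induced e B) (pull g M2).
    split; first exact: psd_pull.
    move=> a b ab nab; rewrite pullE; move: nab; rewrite /induced -/(g a) -/(g b) => nab.
    have gab : g a != g b by apply: contra ab => /eqP /ginj ->.
    have [aS|aS] := boolP (g a \in Sset Bs j).
      have [bS|bS] := boolP (g b \in Sset Bs j).
        by move: nab; rewrite (Scl _ _ aS bS gab).
      case/orP: (notS _ bS) => [bB|bY]; first by move: bB; rewrite gB.
      rewrite (psd_sym _ _ h2) M2Y // hNp // 1?eq_sym // e_sym //.
    case/orP: (notS _ aS) => [aB|aY]; first by move: aB; rewrite gB.
    by rewrite M2Y // hNp.
  have := (hcomp j js _ hP).1.
  have -> : entrywise f (pull g M2) = pull g (entrywise f M2).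
    by apply/matrixP => a b; rewrite pullE !entE pullE.
  move/(psd_push g); rewrite push_pull //.
    by move=> i k /codom_enum iB; rewrite entE h2z // f0.
  by move=> i k /codom_enum kB; rewrite entE h2z' // f0.
set D := entrywise f N - entrywise f M1 - entrywise f M2.
have psdD' : psd D.
  set S := Sset Bs j; set t := #|S|.
  have hts : (t <= s)%N by rewrite /t /s; exact: (leq_bigmax (Ordinal js)).
  pose gS := fun a : 'I_t => (enum_val a : 'I_n).
  have gSinj : injective gS by move=> a b; apply: enum_val_inj.
  pose h := widen_ord hts.
  have hinj : injective h by move=> a b /(congr1 val) /= /val_inj.
  pose A' := push h (pull gS M1); pose B' := push h (pull gS M2).
  have hA' : in_PH (complete_graph s) A'.
    split; first by apply: psd_push; apply: psd_pull.
    by move=> a b ab; rewrite /complete_graph ab.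
  have hB' : in_PH (complete_graph s) B'.
    split; first by apply: psd_push; apply: psd_pull.
    by move=> a b ab; rewrite /complete_graph ab.
  have X := (hsup A' B' hA' hB').1.
  have := psd_pull h X.
  have -> : pull h (entrywise f (A' + B') - entrywise f A' - entrywise f B') = pull gS D.
    apply/matrixP => a b; rewrite !pullE !mxB_E !entE mxD_E.
    have eA : A' (h a) (h b) = M1 (gS a) (gS b) by rewrite -pullE pull_push // pullE.
    have eB : B' (h a) (h b) = M2 (gS a) (gS b) by rewrite -pullE pull_push // pullE.
    by rewrite eA eB hEij.
  move/(psd_push gS); rewrite push_pull //.
    move=> i k /codom_enum iS; rewrite /D !mxB_E !entE hEij.
    case/orP: (notS i iS) => [iB|iY]; first by rewrite h2z // f0 addr0 subrr subr0.
    by rewrite h1z' // f0 add0r subr0 subrr.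
  move=> i k /codom_enum kS; rewrite /D !mxB_E !entE hEij.
  case/orP: (notS k kS) => [kB|kY]; first by rewrite h2z' // f0 addr0 subrr subr0.
  by rewrite h1z // f0 add0r subr0 subrr.
have -> : entrywise f N = entrywise f M1 + entrywise f M2 + D.
  apply/matrixP => i k; rewrite /D !mxD_E !mxE; ring.
by apply: psdD; first apply: psdD.
Qed.
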